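(* Let $m=2k$ with $k\in\mathbb{N}$ and $\beta\in(1,k+1)$. There exists $\epsilon_0(\beta)>0$ such that: if $x\in[\frac{1}{\beta},\frac{1}{\beta}+\epsilon_0(\beta))$ then $T_{\beta,0}(x)\in[\frac{1}{\beta}+\epsilon_0(\beta),\frac{(m-1)\beta+1}{\beta(\beta-1)}-\epsilon_0(\beta)]$; and if $x\in(\frac{(m-1)\beta+1}{\beta(\beta-1)}-\epsilon_0(\beta),\frac{(m-1)\beta+1}{\beta(\beta-1)}]$ then $T_{\beta,m}(x)\in[\frac{1}{\beta}+\epsilon_0(\beta),\frac{(m-1)\beta+1}{\beta(\beta-1)}-\epsilon_0(\beta)]$.
   Context: $T_{\beta,i}(x)=\beta x-i$ for $i\in\{0,\ldots,m\}$. *)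

(* Defs.v *)
From Stdlib Require Export Reals.
Open Scope R_scope.

Definition T (beta : R) (i : nat) (x : R) : R := beta * x - INR i.

Definition rend (m : nat) (beta : R) : R :=
  ((INR m - 1) * beta + 1) / (beta * (beta - 1)).

(* Main.v *)
Require Import Defs.
From Stdlib Require Import Reals Lra.
Open Scope R_scope.

Theorem lemma5p3 (k : nat) (beta : R) :
  1 < beta < INR k + 1 ->
  exists eps0 : R, 0 < eps0 /\
    (forall x : R, 1 / beta <= x < 1 / beta + eps0 ->
       1 / beta + eps0 <= T beta 0 x <= rend (2 * k) beta - eps0) /\
    (forall x : R, rend (2 * k) beta - eps0 < x <= rend (2 * k) beta ->
       1 / beta + eps0 <= T beta (2 * k) x <= rend (2 * k) beta - eps0).
Proof.
  intros [H1 H2].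
  assert (HK : 1 <= INR k).
  { destruct k. simpl in H2; lra. rewrite S_INR; pose proof (pos_INR k); lra. }
  unfold T, rend.
  set (M := INR (2 * k)).
  assert (HM : M = 2 * INR k) by (unfold M; rewrite mult_INR; simpl; lra).
  clearbody M.
  set (a := 1 / beta). set (b := ((M - 1) * beta + 1) / (beta * (beta - 1))).
  set (c := (M + 1 - beta) / (beta - 1)).
  assert (Ha : beta * a = 1) by (unfold a; field; lra).
  assert (Hb : beta * b - M = c) by (unfold b, c; field; lra).
  assert (HD : 0 < beta * (beta - 1)) by nra.
  assert (HP : 0 < M * beta + 1 - beta * beta) by nra.
  assert (g1 : 0 < b - 1).
  { replace (b - 1) with ((M * beta + 1 - beta * beta) / (beta * (beta - 1)))
      by (unfold b; field; lra). apply Rdiv_lt_0_compat; lra. }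
  assert (g2 : 0 < 1 - a).
  { replace (1 - a) with ((beta - 1) / beta) by (unfold a; field; lra).
    apply Rdiv_lt_0_compat; lra. }
  assert (g3 : 0 < c - a).
  { replace (c - a) with ((M * beta + 1 - beta * beta) / (beta * (beta - 1)))
      by (unfold a, c; field; lra). apply Rdiv_lt_0_compat; lra. }
  assert (g4 : 0 < b - c).
  { replace (b - c) with ((beta - 1) / beta) by (unfold b, c; field; lra).
    apply Rdiv_lt_0_compat; lra. }
  clearbody a b c.
  set (g := Rmin (Rmin (b - 1) (1 - a)) (Rmin (c - a) (b - c))).
  assert (Hg : 0 < g) by (unfold g; repeat apply Rmin_glb_lt; lra).
  assert (Hg1 : g <= b - 1) by (unfold g; pose proof (Rmin_l (Rmin (b - 1) (1 - a)) (Rmin (c - a) (b - c))); pose proof (Rmin_l (b-1) (1-a)); lra).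
  assert (Hg2 : g <= 1 - a) by (unfold g; pose proof (Rmin_l (Rmin (b - 1) (1 - a)) (Rmin (c - a) (b - c))); pose proof (Rmin_r (b-1) (1-a)); lra).
  assert (Hg3 : g <= c - a) by (unfold g; pose proof (Rmin_r (Rmin (b - 1) (1 - a)) (Rmin (c - a) (b - c))); pose proof (Rmin_l (c-a) (b-c)); lra).
  assert (Hg4 : g <= b - c) by (unfold g; pose proof (Rmin_r (Rmin (b - 1) (1 - a)) (Rmin (c - a) (b - c))); pose proof (Rmin_r (c-a) (b-c)); lra).
  clearbody g.
  exists (g / (beta + 1)).
  assert (He : g / (beta + 1) * (beta + 1) = g) by (field; lra).
  assert (He0 : 0 < g / (beta + 1)) by (apply Rdiv_lt_0_compat; lra).
  set (e := g / (beta + 1)) in *. clearbody e.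
  assert (He1 : e <= g) by nra.
  split; [lra | split]; intros x [Hx1 Hx2].
  - simpl INR. 
    assert (beta * a <= beta * x) by (apply Rmult_le_compat_l; lra).
    assert (beta * x < beta * (a + e)) by (apply Rmult_lt_compat_l; lra).
    nra.
  -
    assert (beta * (b - e) < beta * x) by (apply Rmult_lt_compat_l; lra).
    assert (beta * x <= beta * b) by (apply Rmult_le_compat_l; lra).
    nra.
Qed.
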